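(* Let $n>3$ and let $\mathcal{L}\subseteq\mathcal{L}_n$ be a linear subspace that is a Jordan algebra, is invariant under the conjugation action of $S_n$, and contains $\mathrm{Anti}_n$. Then $\mathrm{DS}_n\subseteq\mathcal{L}$.
   Context: $\mathbf{1}\in\mathbb{R}^n$ is the all-ones column vector; $\mathcal{L}_n=\{Q\in \mathrm{Mat}_n(\mathbb{R}): Q\mathbf{1}=0\}$. $\mathrm{DS}_n:=\{Q\in\mathcal{L}_n:\mathbf{1}^TQ=0\}$ (zero row and column sums); $\mathrm{Anti}_n$ is the space of antisymmetric matrices in $\mathcal{L}_n$ (isomorphic as $S_n$-module to the irreducible $\{n-2,1^2\}$). For $\sigma\in S_n$, $K_\sigma$ is the permutation matrix with $e_iK_\sigma=e_{\sigma(i)}$, and $S_n$ acts by $\sigma\cdot X=K_\sigma^TXK_\sigma$. A Jordan algebra is a subspace closed under $AB+BA$. *)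

(* Defs.v *)
From mathcomp Require Import all_boot all_order all_algebra all_fingroup.
From mathcomp Require Import reals.
Set Implicit Arguments. Unset Strict Implicit. Unset Printing Implicit Defensive.
Import GRing.Theory Num.Theory.
Local Open Scope ring_scope.

Definition ones (R : realType) (n : nat) : 'cV[R]_n := const_mx 1.

Definition inLn (R : realType) (n : nat) (Q : 'M[R]_n) : Prop :=
  Q *m ones R n = 0.

Definition inDS (R : realType) (n : nat) (Q : 'M[R]_n) : Prop :=
  inLn Q /\ (ones R n)^T *m Q = 0.

Definition inAnti (R : realType) (n : nat) (Q : 'M[R]_n) : Prop :=
  inLn Q /\ Q^T = - Q.

(* K_sigma with e_i K_sigma = e_{sigma(i)}, i.e. (K_sigma) i j = (sigma i == j);
   this is mathcomp's perm_mx. Action: sigma . X = K_sigma^T X K_sigma. *)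
Definition Kperm (R : realType) (n : nat) (s : 'S_n) : 'M[R]_n := perm_mx s.
Definition sact (R : realType) (n : nat) (s : 'S_n) (X : 'M[R]_n) : 'M[R]_n :=
  (Kperm R s)^T *m X *m Kperm R s.

Definition jordan_closed (R : realType) (n : nat) (L : {vspace 'M[R]_n}) : Prop :=
  forall A B, A \in L -> B \in L -> A *m B + B *m A \in L.

(* Main.v *)
Require Import Defs.
From mathcomp Require Import all_boot all_order all_algebra all_fingroup.
From mathcomp Require Import reals zify ring lra.
Set Implicit Arguments. Unset Strict Implicit. Unset Printing Implicit Defensive.
Import GRing.Theory Num.Theory.
Local Open Scope ring_scope.

Section S.
Lemma sqA (R : realType) n (u v : 'cV[R]_n) (a b : R) :
  u^T *m u = a%:M -> v^T *m v = b%:M -> u^T *m v = 0 ->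
  (u *m v^T - v *m u^T) *m (u *m v^T - v *m u^T)
    = - (b *: (u *m u^T) + a *: (v *m v^T)).
Proof.
move=> h1 h2 h3.
have vu : v^T *m u = 0 by rewrite -[v^T *m u]trmxK trmx_mul trmxK h3 trmx0.
have E : forall x y z w : 'cV[R]_n, x *m y^T *m (z *m w^T) = x *m (y^T *m z) *m w^T.
  by move=> x y z w; rewrite !mulmxA.
rewrite mulmxBl !mulmxBr !E h1 h2 h3 vu !mulmx0 !mul0mx !mul_mx_scalar -!scalemxAl.
by rewrite !subr0 sub0r opprD.
Qed.

Variable R : realType.
Variable n : nat.

Definition ev (i : 'I_n) : 'cV[R]_n := delta_mx i 0.

Lemma evdot i j : (ev i)^T *m ev j = (i == j)%:R%:M.
Proof.
rewrite /ev trmx_delta mul_delta_mx_cond; apply/matrixP=> x y.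
by rewrite !ord1; case: (i == j); rewrite !mxE /=.
Qed.

Lemma ev_outer i j : ev i *m (ev j)^T = delta_mx i j.
Proof. by rewrite /ev trmx_delta mul_delta_mx. Qed.

Lemma ev_ones i : (ev i)^T *m ones R n = 1%:M.
Proof.
by rewrite /ev trmx_delta -rowE; apply/matrixP=> x y; rewrite !ord1 !mxE.
Qed.

Lemma half (X : 'M[R]_n) : X = 2^-1 *: (X + X).
Proof. apply/matrixP=> p q; by rewrite !mxE; field. Qed.
Lemma anti_uv (x y : 'cV[R]_n) : x^T *m ones R n = 0 -> y^T *m ones R n = 0 ->
  inAnti (x *m y^T - y *m x^T).
Proof.
move=> hx hy; split.
  by rewrite /inLn mulmxBl -!mulmxA hx hy !mulmx0 subrr.
by rewrite raddfB /= !trmx_mul !trmxK opprB.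
Qed.

Variable L : {vspace 'M[R]_n}.
Hypothesis hJ : jordan_closed L.
Hypothesis hA : forall Q : 'M[R]_n, inAnti Q -> Q \in L.

Lemma sq_in A : A \in L -> A *m A \in L.
Proof. by move=> hA'; rewrite (half (A *m A)) memvZ // hJ. Qed.

Lemma sq_uv (x y : 'cV[R]_n) a b : x^T *m ones R n = 0 -> y^T *m ones R n = 0 ->
  x^T *m x = a%:M -> y^T *m y = b%:M -> x^T *m y = 0 ->
  b *: (x *m x^T) + a *: (y *m y^T) \in L.
Proof.
move=> hx hy h1 h2 h3; rewrite -memvN -(sqA h1 h2 h3).
by apply: sq_in; apply: hA; apply: anti_uv.
Qed.
Ltac dt E := rewrite ?raddfB ?raddfD /= ?mulmxBl ?mulmxDl ?mulmxBr ?mulmxDr !evdot ?eqxx ?E;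
  apply/matrixP=> x y; rewrite !ord1 !mxE /=; ring.
Lemma Lij (hn : (3 < n)%N) i j : (ev i - ev j) *m (ev i - ev j)^T \in L.
Proof.
have [->|ij] := eqVneq i j; first by rewrite subrr mul0mx mem0v.
have : (1 < #|~: [set i; j]|)%N.
  have h := cardsC [set i; j]; rewrite cards2 ij card_ord in h; lia.
case/card_gt1P => k [l [hk hl kl]].
move: hk hl; rewrite !inE !negb_or => /andP [ki kj] /andP [li lj].
have e1 := negbTE ij; have e2 := negbTE kl; have e3 := negbTE ki.
have e4 := negbTE kj; have e5 := negbTE li; have e6 := negbTE lj.
have f1 : (j == i) = false by rewrite eq_sym.
have f2 : (l == k) = false by rewrite eq_sym.
have f3 : (i == k) = false by rewrite eq_sym.
have f4 : (j == k) = false by rewrite eq_sym.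
have f5 : (i == l) = false by rewrite eq_sym.
have f6 : (j == l) = false by rewrite eq_sym.
set v := ev i - ev j; set u := ev k - ev l; set w := ev k + ev l - ev i - ev j.
have o : forall x y : 'I_n, (ev x - ev y)^T *m ones R n = 0.
  by move=> x y; rewrite raddfB /= mulmxBl !ev_ones subrr.
have ow : w^T *m ones R n = 0.
  by rewrite /w !raddfB raddfD /= !mulmxBl mulmxDl !ev_ones; apply/matrixP=> x y; rewrite !mxE; ring.
have D : forall (x y : 'cV[R]_n) (c : R), x^T *m y = c%:M -> x^T *m y = c%:M by [].
have EE := (e1, e2, e3, e4, e5, e6, f1, f2, f3, f4, f5, f6).
have vv : v^T *m v = 2%:M by dt EE.
have uu : u^T *m u = 2%:M by dt EE.
have ww : w^T *m w = 4%:M by dt EE.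
have uv : u^T *m v = 0 by dt EE.
have wv : w^T *m v = 0 by dt EE.
have uw : u^T *m w = 0 by dt EE.
have P1 := sq_uv (o _ _) (o _ _) uu vv uv.
have P2 := sq_uv ow (o _ _) ww vv wv.
have P3 := sq_uv (o _ _) ow uu ww uw.
have -> : v *m v^T = 8^-1 *: (2 *: (2 *: (u *m u^T) + 2 *: (v *m v^T))
   + (2 *: (w *m w^T) + 4 *: (v *m v^T)) - (4 *: (u *m u^T) + 2 *: (w *m w^T))).
  set U := u *m u^T; set V := v *m v^T; set W := w *m w^T.
  by apply/matrixP=> p q; rewrite !mxE; field.
by rewrite memvZ // memvB // memvD // memvZ.
Qed.
Lemma DS_in (hn : (3 < n)%N) Q : inDS Q -> Q \in L.
Proof.
case=> h1 h2.
have S1 : \sum_i \sum_j Q i j *: delta_mx i i = 0 :> 'M[R]_n.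
  apply: big1 => i _; rewrite -scaler_suml.
  have := congr1 (fun M : 'cV[R]_n => M i 0) h1; rewrite !mxE => h.
  suff -> : \sum_j Q i j = 0 by rewrite scale0r.
  by rewrite -[RHS]h; apply: eq_bigr => j _; rewrite /ones mxE mulr1.
have S2 : \sum_i \sum_j Q i j *: delta_mx j j = 0 :> 'M[R]_n.
  rewrite exchange_big; apply: big1 => j _; rewrite -scaler_suml.
  have := congr1 (fun M : 'rV[R]_n => M 0 j) h2; rewrite !mxE => h.
  suff -> : \sum_i Q i j = 0 by rewrite scale0r.
  by rewrite -[RHS]h; apply: eq_bigr => i _; rewrite /ones !mxE mul1r.
have S3 : \sum_i \sum_j Q i j *: delta_mx i j = Q by rewrite -matrix_sum_delta.
have S4 : \sum_i \sum_j Q i j *: delta_mx j i = Q^T.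
  rewrite [RHS]matrix_sum_delta exchange_big; apply: eq_bigr => i _.
  by apply: eq_bigr => j _; rewrite mxE.
have E : Q + Q^T = - \sum_i \sum_j Q i j *: ((ev i - ev j) *m (ev i - ev j)^T).
  have -> : \sum_i \sum_j Q i j *: ((ev i - ev j) *m (ev i - ev j)^T) =
    \sum_i (\sum_j Q i j *: delta_mx i i + \sum_j Q i j *: delta_mx j j
       - \sum_j Q i j *: delta_mx i j - \sum_j Q i j *: delta_mx j i).
    apply: eq_bigr => i _; rewrite -big_split -!sumrB /=; apply: eq_bigr => j _.
    rewrite raddfB /= mulmxBl !mulmxBr !ev_outer.
    by apply/matrixP=> p q; rewrite !mxE; ring.
  rewrite !sumrB big_split /= S1 S2 S3 S4.
  by apply/matrixP=> p q; rewrite !mxE; ring.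
have -> : Q = 2^-1 *: (Q - Q^T) + 2^-1 *: (Q + Q^T).
  by apply/matrixP=> p q; rewrite !mxE; field.
apply: memvD; apply: memvZ.
  apply: hA; split.
    rewrite /inLn mulmxBl h1 sub0r.
    by rewrite -[Q^T *m _]trmxK trmx_mul trmxK h2 trmx0 oppr0.
  by rewrite raddfB /= trmxK opprB.
rewrite E memvN; apply: memv_suml => i _; apply: memv_suml => j _.
by apply: memvZ; apply: Lij.
Qed.
End S.

Theorem mainTheorem16 (R : realType) (n : nat) (L : {vspace 'M[R]_n}) :
  (3 < n)%N ->
  (forall Q : 'M[R]_n, Q \in L -> inLn Q) ->
  jordan_closed L ->
  (forall (s : 'S_n) (X : 'M[R]_n), X \in L -> sact s X \in L) ->
  (forall Q : 'M[R]_n, inAnti Q -> Q \in L) ->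
  forall Q : 'M[R]_n, inDS Q -> Q \in L.
Proof. by move=> hn _ hJ _ hA Q hQ; apply: DS_in. Qed.
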